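(* Let $\alpha_{\mathrm{fail}},\alpha_{\mathrm{succ}},\alpha_{\mathrm{ch}}>0$ be arbitrary and $\mathrm{3RR}=\textsc{RoundRobin}(\mathrm{ALG}_{\mathrm{fail}},\mathrm{ALG}_{\mathrm{succ}},\mathrm{ALG}_{\mathrm{ch}};\alpha_{\mathrm{fail}},\alpha_{\mathrm{succ}},\alpha_{\mathrm{ch}})$, run on an SSC instance $I$. Then for every realization $x$ and every $h\in\{\mathrm{fail},\mathrm{succ},\mathrm{ch}\}$, $$\frac1{\alpha_h}\sum_{\tau=1}^{\tau_1}\mathrm{cost}^{\mathrm{3RR}}_\tau(\mathrm{ALG}_h,I)\le\frac1{\alpha_{\mathrm{ch}}}\,\mathrm{cost}(\mathrm{OPT},I).$$
   Context: An instance $I$ of Stochastic Score Classification (SSC) consists of tests $N=\{1,\dots,n\}$, costs $c_j\ge 0$, success probabilities $p_j\in(0,1)$, and integers $0=t_1<t_2<\dots<t_B<t_{B+1}=n+1$. The outcome vector $x\in\{0,1\}^N$ has independent coordinates with $\Pr[x_j=1]=p_j$ (test $j$ succeeds iff $x_j=1$, otherwise it fails). The score $f(x)$ is the unique $i\in\{1,\dots,B\}$ with $t_i\le\|x\|_1\le t_{i+1}-1$. A (possibly adaptive) strategy conducts tests one at a time, each at most once, the choice of the next test possibly depending on outcomes observed so far, and stops as soon as $f(x)$ is determined (i.e., all $x'\in\{0,1\}^N$ agreeing with $x$ on the conducted tests have $f(x')=f(x)$). $\mathrm{cost}(S,I)$ is the random total cost of the tests conducted by strategy $S$ on $I$. $\mathrm{OPT}$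 is a fixed strategy minimizing $\mathbb{E}[\mathrm{cost}(S,I)]$ over all adaptive strategies $S$. Let $\sigma_{\mathrm{fail}},\sigma_{\mathrm{succ}},\sigma_{\mathrm{ch}}$ be permutations of $N$ (ties broken arbitrarily) such that $c_{\sigma_{\mathrm{fail}}(1)}/(1-p_{\sigma_{\mathrm{fail}}(1)})\le\dots\le c_{\sigma_{\mathrm{fail}}(n)}/(1-p_{\sigma_{\mathrm{fail}}(n)})$, $c_{\sigma_{\mathrm{succ}}(1)}/p_{\sigma_{\mathrm{succ}}(1)}\le\dots\le c_{\sigma_{\mathrm{succ}}(n)}/p_{\sigma_{\mathrm{succ}}(n)}$, and $c_{\sigma_{\mathrm{ch}}(1)}\le\dots\le c_{\sigma_{\mathrm{ch}}(n)}$. $\mathrm{ALG}_{\mathrm{fail}},\mathrm{ALG}_{\mathrm{succ}},\mathrm{ALG}_{\mathrm{ch}}$ denote the orders of tests given by $\sigma_{\mathrm{fail}},\sigma_{\mathrm{succ}},\sigma_{\mathrm{ch}}$ respectively. $\textsc{RoundRobin}(\mathrm{ALG}_1,\dots,\mathrm{ALG}_k;\alpha_1,\dots,\alpha_k)$, for fixed orders $\mathrm{ALG}_h$ of $N$ and weights $\alpha_h>0$: initialize $C_h=0$ for all $h$; while $f(x)$ is not determined, for each $h$ let $\delta_h$ be the cost of the first test in the order $\mathrm{ALG}_h$ that has not yet been conducted by the scheme, choose $h^\star\in\arg\min_h (C_h+\delta_h)/\alpha_h$ (ties arbitrary), conduct that test of $\mathrm{ALG}_{h^\star}$, and set $C_{h^\star}\leftarrow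 C_{h^\star}+\delta_{h^\star}$. Each loop iteration is a step; for a round-robin algorithm $\mathrm{RR}$ and step $\tau$ (before termination), $\mathrm{cost}^{\mathrm{RR}}_\tau(\mathrm{ALG}_h,I)$ equals the cost of the test conducted in step $\tau$ if $h=h^\star$ in that step, and $0$ otherwise. For a realization $x$ with $i=f(x)$, $\tau_1$ is the smallest integer $\tau\ge 0$ such that among the tests conducted by $\mathrm{3RR}$ in steps $1,\dots,\tau$ at least $t_i$ succeeded or at least $n+1-t_{i+1}$ failed. *)

(* Defs.v *)
From mathcomp Require Import all_boot all_order all_algebra.
Set Implicit Arguments. Unset Strict Implicit. Unset Printing Implicit Defensive.
Import Order.TTheory GRing.Theory Num.Theory.
Local Open Scope ring_scope.

Section SSC.
Variable R : realFieldType.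
Variable n : nat.

Definition real := {ffun 'I_n -> bool}.

Definition ones (x : real) : nat := #|[set j | x j]|.

Definition prob (p : 'I_n -> R) (x : real) : R :=
  \prod_j (if x j then p j else 1 - p j).

Definition agree (D : seq 'I_n) (x x' : real) : bool :=
  [forall j, (j \in D) ==> (x' j == x j)].

Definition determinedb (t : nat -> nat) (B : nat) (x : real) (D : seq 'I_n) : bool :=
  [exists i : 'I_B.+1, (0 < i)%N &&
     [forall x' : real, agree D x x' ==> (t i <= ones x' < t i.+1)%N]].

(* Adaptive (deterministic) strategy: next test given the history of
   conducted tests with their outcomes; None = stop. *)
Definition strategy := seq ('I_n * bool) -> option 'I_n.

Fixpoint srun (t : nat -> nat) (B : nat) (S : strategy) (x : real) (fuel : nat)
  (hist : seq ('I_n * bool)) : seq ('I_n * bool) :=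
  match fuel with
  | 0 => hist
  | f.+1 =>
    if determinedb t B x (map fst hist) then hist else
    match S hist with
    | None => hist
    | Some j => srun t B S x f (rcons hist (j, x j))
    end
  end.

(* run of strategy S on realization x (at most n tests are ever possible) *)
Definition run t B (S : strategy) (x : real) := srun t B S x n [::].

Definition valid_strategy t B (S : strategy) : Prop :=
  forall x : real, uniq (map fst (run t B S x)) /\
                   determinedb t B x (map fst (run t B S x)).

Definition scost (c : 'I_n -> R) t B (S : strategy) (x : real) : R :=
  \sum_(q <- run t B S x) c q.1.

Definition ecost (c p : 'I_n -> R) t B (S : strategy) : R :=
  \sum_(x : real) prob p x * scost c t B S x.

Definition is_optimal (c p : 'I_n -> R) t B (S : strategy) : Prop :=
  valid_strategy t B S /\
  forall S', valid_strategy t B S' -> ecost c p t B S <= ecost c p t B S'.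

Variable k : nat.

Definition first_untested (s : seq 'I_n) (done : seq 'I_n) : option 'I_n :=
  ohead [seq j <- s | j \notin done].

(* A trace is a list of steps (h*, test conducted). *)
Definition rr_C (c : 'I_n -> R) (pre : seq ('I_k * 'I_n)) (h : 'I_k) : R :=
  \sum_(r <- pre | r.1 == h) c r.2.

Definition rr_step_ok (c : 'I_n -> R) t B (ords : 'I_k -> seq 'I_n)
  (alpha : 'I_k -> R) (x : real) (pre : seq ('I_k * 'I_n)) (q : 'I_k * 'I_n) : Prop :=
  let done := map snd pre in
  ~~ determinedb t B x done /\
  first_untested (ords q.1) done = Some q.2 /\
  forall (h' : 'I_k) (j' : 'I_n), first_untested (ords h') done = Some j' ->
     (rr_C c pre q.1 + c q.2) / alpha q.1 <= (rr_C c pre h' + c j') / alpha h'.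

(* tr is a complete execution of RoundRobin(ords; alpha) on realization x
   (with some arbitrary tie-breaking). *)
Definition rr_run (c : 'I_n -> R) t B (ords : 'I_k -> seq 'I_n)
  (alpha : 'I_k -> R) (x : real) (tr : seq ('I_k * 'I_n)) : Prop :=
  (forall pre q suf, tr = pre ++ q :: suf -> rr_step_ok c t B ords alpha x pre q) /\
  determinedb t B x (map snd tr).

(* cost^{RR}_tau(ALG_h, I) for step tau (1-based) summed over tau = 1..tau1 *)
Definition rr_cost_upto (c : 'I_n -> R) (tr : seq ('I_k * 'I_n)) (tau1 : nat) (h : 'I_k) : R :=
  \sum_(r <- take tau1 tr | r.1 == h) c r.2.

End SSC.

Definition tau1_prop n k (t : nat -> nat) (i : nat) (x : real n)
  (tr : seq ('I_k * 'I_n)) (tau : nat) : bool :=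
  let D := take tau (map snd tr) in
  (t i <= count (fun j => x j) D)%N || (n.+1 - t i.+1 <= count (fun j => ~~ x j) D)%N.

Definition is_tau1 n k t i (x : real n) (tr : seq ('I_k * 'I_n)) (tau1 : nat) : Prop :=
  tau1_prop t i x tr tau1 /\ forall tau, (tau < tau1)%N -> ~~ tau1_prop t i x tr tau.

(* The three algorithms indexed by 'I_3: 0 = fail, 1 = succ, 2 = ch. *)
Definition three (T : Type) (a b d : T) (h : 'I_3) : T :=
  match val h with 0 => a | 1 => b | _ => d end.

(* Main.v *)
Require Import Defs.
From mathcomp Require Import all_boot all_order all_algebra.
From mathcomp Require Import zify.
Import Order.TTheory GRing.Theory Num.Theory.
Local Open Scope ring_scope.

Lemma fu_notin {n : nat} {s D : seq 'I_n} {j} :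
  first_untested s D = Some j -> (j \in s) && (j \notin D).
Proof.
rewrite /first_untested; case E: [seq j <- s | j \notin D] => [|a l] //= [<-].
have : a \in [seq j <- s | j \notin D] by rewrite E mem_head.
by rewrite mem_filter andbC.
Qed.

Lemma fu_index (n : nat) (s D : seq 'I_n) j :
  uniq s -> first_untested s D = Some j -> (index j s <= size D)%N.
Proof.
move=> us hj; have /andP[js jD] := fu_notin hj.
have hall : all (fun y => y \in D) (take (index j s) s).
  clear jD; move: us hj js; elim: s => [|a s' IH] //= /andP[aS us].
  rewrite /first_untested /=; case: ifP => aD /=.
    by move=> [->]; rewrite eqxx.
  move=> hj; have /andP[js' jD] := fu_notin hj.
  have -> : (a == j) = false.
    by apply/eqP => aj; rewrite aj jD in aD.
  by rewrite /= -[a \in D]negbK aD /= IH.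
have -> : index j s = size (take (index j s) s).
  by rewrite size_takel // index_size.
apply: uniq_leq_size; first exact: take_uniq.
by move=> y; move/allP: hall => /(_ y).
Qed.

Section Sums.
Variable R : realFieldType.
Variable n : nat.
Variable c : 'I_n -> R.
Hypothesis hc : forall j, 0 <= c j.

Lemma sum_ge0 (s : seq 'I_n) : 0 <= \sum_(j <- s) c j.
Proof. by apply: sumr_ge0 => j _. Qed.

Lemma sum_sub (U V : seq 'I_n) : uniq U -> uniq V -> {subset U <= V} ->
  \sum_(j <- U) c j <= \sum_(j <- V) c j.
Proof.
move=> uU uV sUV.
rewrite [X in _ <= X](bigID (fun j => j \in U)) /=.
have -> : \sum_(j <- V | j \in U) c j = \sum_(j <- U) c j.
  rewrite -big_filter; apply: perm_big; apply: uniq_perm.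
  - exact: filter_uniq.
  - exact: uU.
  move=> y; rewrite mem_filter; case yU: (y \in U) => //=; exact: sUV.
by rewrite lerDl; apply: sumr_ge0 => j _.
Qed.

Lemma sum_take_le (s : seq 'I_n) m : \sum_(j <- take m s) c j <= \sum_(j <- s) c j.
Proof.
by rewrite -{2}(cat_take_drop m s) big_cat /= lerDl sum_ge0.
Qed.

Lemma cheap_subseq (s u : seq 'I_n) : sorted (fun a b => c a <= c b) s ->
  subseq u s -> \sum_(j <- take (size u) s) c j <= \sum_(j <- u) c j.
Proof.
elim: s u => [|a s IH] u /=.
  by move=> _ /eqP ->; rewrite !big_nil.
move=> hs; case: u => [|b u]; first by rewrite take0 !big_nil.
rewrite /= !big_cons.
have ss : sorted (fun a b => c a <= c b) s := path_sorted hs.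
case: eqP => [->|nba] hsub; first by rewrite lerD2l; exact: IH.
have bs : b \in s by apply: (mem_subseq hsub); rewrite mem_head.
have us : subseq u s := subseq_trans (subseq_cons u b) hsub.
apply: lerD; last exact: IH.
have tr : transitive (fun a b : 'I_n => c a <= c b).
  by move=> y x z; apply: le_trans.
have := order_path_min tr hs => /allP; apply; exact: bs.
Qed.
End Sums.

Lemma cheap_main (R : realFieldType) (n : nat) (c : 'I_n -> R)
  (hc : forall j, 0 <= c j) (sch D : seq 'I_n) m :
  sorted (fun a b => c a <= c b) sch -> uniq sch -> (forall j, j \in sch) ->
  uniq D -> (m <= size D)%N ->
  \sum_(j <- take m sch) c j <= \sum_(j <- D) c j.
Proof.
move=> ss us alls uD hm.
set u := [seq j <- sch | j \in D].
have pu : perm_eq u D.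
  apply: uniq_perm; [exact: filter_uniq | exact: uD |].
  by move=> y; rewrite mem_filter alls andbT.
rewrite -(perm_big _ pu).
have su : size u = size D by apply: perm_size.
have H : \sum_(j <- take (size u) sch) c j <= \sum_(j <- u) c j.
  exact: (@cheap_subseq R n c sch u ss (filter_subseq _ _)).
apply: le_trans H.
rewrite su -(take_takel sch hm); exact: (@sum_take_le R n c hc).
Qed.

Lemma card_filt (n : nat) (D : seq 'I_n) (P : pred 'I_n) :
  uniq D -> #|[set j | (j \in D) && P j]| = count P D.
Proof.
move=> uD; rewrite -size_filter.
have -> : #|[set j | (j \in D) && P j]| = #|[pred j | j \in filter P D]|.
  by apply: eq_card => y; rewrite inE mem_filter andbC.
by rewrite -(card_uniqP _) //; exact: filter_uniq.
Qed.

Lemma agree_refl n (D : seq 'I_n) (x : real n) : agree D x x.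
Proof. by apply/forallP => j; apply/implyP. Qed.

Lemma opt_size n B (t : nat -> nat)
  (ht : forall i, (1 <= i <= B)%N -> (t i < t i.+1)%N)
  (x : real n) (i : nat) (hi : (1 <= i <= B)%N) (hx : (t i <= ones x < t i.+1)%N)
  (D : seq 'I_n) :
  uniq D -> determinedb t B x D ->
  (t i <= count (fun j => x j) D /\ n.+1 - t i.+1 <= count (fun j => ~~ x j) D)%N.
Proof.
move=> uD /existsP[i' /andP[i'0 /forallP H]].
have mono : forall a d, (1 <= a)%N -> (a + d <= B.+1)%N -> (t a <= t (a + d))%N.
  move=> a d a1; elim: d => [|d IH] hd; first by rewrite addn0.
  rewrite addnS; apply: leq_trans (IH _) (ltnW (ht _ _)); lia.
have i'B : (i' <= B)%N by have := ltn_ord i'.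
have := H x; rewrite agree_refl /= => /andP[h1 h2].
have ii' : i = i'.
  case: (ltngtP i i') => // [lt|gt].
  - have := mono i.+1%N (i' - i.+1)%N ltac:(lia) ltac:(lia).
    have -> : (i.+1 + (i' - i.+1) = i')%N by lia.
    lia.
  - have := mono i'.+1%N (i - i'.+1)%N ltac:(lia) ltac:(lia).
    have -> : (i'.+1 + (i - i'.+1) = i)%N by lia.
    lia.
subst i.
set x1 : real n := [ffun j => (j \in D) && x j].
set x2 : real n := [ffun j => (j \notin D) || x j].
have a1 : agree D x x1 by apply/forallP => j; rewrite ffunE; apply/implyP => ->.
have a2 : agree D x x2 by apply/forallP => j; rewrite ffunE; apply/implyP => ->.
have := H x1; rewrite a1 /= => /andP[k1 _].
have := H x2; rewrite a2 /= => /andP[_ k2].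
have o1 : ones x1 = count (fun j => x j) D.
  rewrite /ones -(@card_filt n D (fun j => x j) uD); apply: eq_card => y.
  by rewrite !inE ffunE.
have o2 : (ones x2 + count (fun j => ~~ x j) D = n)%N.
  rewrite -(@card_filt n D (fun j => ~~ x j) uD).
  have -> : ones x2 = #|~: [set j | (j \in D) && ~~ x j]|.
    rewrite /ones; apply: eq_card => y.
    by rewrite !inE ffunE negb_and negbK.
  by rewrite addnC cardsC card_ord.
rewrite o1 in k1. split; first by []. move: o2 k2; clear. set cc := count _ D. set oo := ones _. lia.
Qed.

Lemma countC (T : Type) (P : T -> bool) (s : seq T) :
  (count (fun j => P j) s + count (fun j => ~~ P j) s = size s)%N.
Proof. by elim: s => //= a s IH; case: (P a) => /=; lia. Qed.

Lemma three_max (T : Type) (a b d : T) : three a b d ord_max = d.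
Proof. by []. Qed.

Section Trace.
Variable R : realFieldType.
Variables (n B : nat) (c : 'I_n -> R) (t : nat -> nat).
Variable ords : 'I_3 -> seq 'I_n.
Variable alpha : 'I_3 -> R.
Variable x : real n.
Variable tr : seq ('I_3 * 'I_n).
Hypothesis htr : rr_run c t B ords alpha x tr.

Lemma tr_notin pre q suf : tr = pre ++ q :: suf -> q.2 \notin map snd pre.
Proof.
move=> E; have [_ [fq _]] := htr.1 _ _ _ E.
by have /andP[_ ->] := fu_notin fq.
Qed.

Lemma tr_uniq pre suf : tr = pre ++ suf -> uniq (map snd pre).
Proof.
elim/last_ind: pre suf => [|pre q IH] suf E //.
rewrite cat_rcons in E.
rewrite map_rcons rcons_uniq (tr_notin _ _ _ E) /=.
by apply: (IH (q :: suf)).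
Qed.

Lemma tr_ch_index pre suf r : tr = pre ++ suf -> r \in pre -> r.1 = ord_max ->
  uniq (ords ord_max) -> (index r.2 (ords ord_max) < size pre)%N.
Proof.
move=> E rp r1 us.
case/splitPr: rp E => p1 p2 E.
rewrite -catA cat_cons in E.
have [_ [fq _]] := htr.1 _ _ _ E.
rewrite r1 in fq.
have := @fu_index _ _ _ _ us fq; rewrite size_map size_cat /=; lia.
Qed.
End Trace.

Lemma main_step (R : realFieldType) (n B : nat) (c p : 'I_n -> R) (t : nat -> nat)
  (hc : forall j, 0 <= c j)
  (ht : forall i, (1 <= i <= B)%N -> (t i < t i.+1)%N)
  (sfail ssucc sch : seq 'I_n)
  (hsch : perm_eq sch (enum 'I_n))
  (hsch' : sorted (fun a b => c a <= c b) sch)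
  (afail asucc ach : R) (hach : 0 < ach)
  (OPT : strategy n) (hOPT : is_optimal c p t B OPT)
  (x : real n) (i : nat) (hi : (1 <= i <= B)%N) (hx : (t i <= ones x < t i.+1)%N)
  (tr : seq ('I_3 * 'I_n))
  (htr : rr_run c t B (three sfail ssucc sch) (three afail asucc ach) x tr)
  (tau1 : nat) (htau1 : is_tau1 t i x tr tau1)
  pre q suf : tr = pre ++ q :: suf -> (size pre < tau1)%N ->
  (three afail asucc ach q.1)^-1 * (rr_C c pre q.1 + c q.2)
    <= ach^-1 * scost c t B OPT x.
Proof.
move=> E hs.
set ords := three sfail ssucc sch.
have us : uniq sch by rewrite (perm_uniq hsch) enum_uniq.
have alls : forall j, j \in sch by move=> j; rewrite (perm_mem hsch) mem_enum.
have [nd [fq hmin]] := htr.1 _ _ _ E.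
have /andP[_ qn] := fu_notin fq.
have [j' fj'] : exists j', first_untested sch (map snd pre) = Some j'.
  rewrite /first_untested.
  case E2: [seq j <- sch | j \notin map snd pre] => [|a l]; last by exists a.
  have : q.2 \in [seq j <- sch | j \notin map snd pre] by rewrite mem_filter qn alls.
  by rewrite E2.
have H1 := hmin ord_max j' fj'.
rewrite /= in H1.
set P := fun r : 'I_3 * 'I_n => r.1 == ord_max.
have eC : rr_C c pre ord_max + c j' = \sum_(j <- j' :: map snd (filter P pre)) c j.
  by rewrite big_cons big_map big_filter addrC.
have uP : uniq (map snd pre) := @tr_uniq _ _ _ _ _ _ _ _ _ htr _ _ E.
have sub1 : subseq (map snd (filter P pre)) (map snd pre).
  by apply: map_subseq; apply: filter_subseq.
have /andP[j's j'n] := fu_notin fj'.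
have H2 : rr_C c pre ord_max + c j' <= \sum_(j <- take (size pre).+1 sch) c j.
  rewrite eC; apply: sum_sub => //.
  - rewrite /= (subseq_uniq sub1 uP) andbT.
    by apply: contra j'n; apply: (mem_subseq sub1).
  - exact: take_uniq.
  move=> y; rewrite inE => /orP[/eqP ->|].
    by rewrite in_take //; have := @fu_index _ _ _ _ us fj'; rewrite size_map.
  case/mapP => r; rewrite mem_filter => /andP[/eqP r1 rp] ->.
  rewrite in_take //.
  have := @tr_ch_index _ _ _ _ _ _ _ _ _ htr pre (q :: suf) r E rp r1 us.
  by rewrite three_max; apply: ltnW.
have [vu vd] := hOPT.1 x.
set D := map fst (run t B OPT x).
have [o1 o2] := @opt_size _ _ _ ht _ _ hi hx _ vu vd.
have nt := htau1.2 _ hs.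
rewrite /tau1_prop E map_cat take_size_cat ?size_map // in nt.
have H3 : \sum_(j <- take (size pre).+1 sch) c j <= scost c t B OPT x.
  rewrite /scost -(big_map fst xpredT (fun j => c j)).
  apply: (@cheap_main R n c hc sch D _ hsch' us alls vu).
  have n1 : (count (fun j : 'I_n => x j) (map snd pre) < t i /\
             count (fun j : 'I_n => ~~ x j) (map snd pre) < n.+1 - t i.+1)%N.
    move: nt; rewrite negb_or => /andP[u1 u2]; split; rewrite ltnNge; [exact: u1|exact: u2].
  have m1 : (t i <= count (fun j : 'I_n => x j) D /\
             n.+1 - t i.+1 <= count (fun j : 'I_n => ~~ x j) D)%N.
    split; [exact: o1|exact: o2].
  have e1 : (count (fun j : 'I_n => x j) (map snd pre) +
             count (fun j : 'I_n => ~~ x j) (map snd pre) = size pre)%N.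
    rewrite (countC _ (fun j : 'I_n => x j)). exact: size_map.
  have e2 : (count (fun j : 'I_n => x j) D +
             count (fun j : 'I_n => ~~ x j) D = size D)%N.
    exact: countC.
  clear -n1 m1 e1 e2.
  move: n1 m1 e1 e2.
  move: (count (fun j : 'I_n => x j) (map snd pre)) => a1.
  move: (count (fun j : 'I_n => ~~ x j) (map snd pre)) => a2.
  move: (count (fun j : 'I_n => x j) D) => b1.
  move: (count (fun j : 'I_n => ~~ x j) D) => b2.
  move: (size D) (size pre) => sD sp.
  lia.
rewrite mulrC [ach^-1 * _]mulrC.
apply: le_trans H1 _.
apply: ler_wpM2r; first by rewrite invr_ge0 ltW.
exact: le_trans H2 H3.
Qed.

Theorem lemma2 (R : realFieldType) (n B : nat) (c p : 'I_n -> R) (t : nat -> nat)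
  (hc : forall j, 0 <= c j) (hp : forall j, 0 < p j < 1)
  (hB : (1 <= B)%N) (ht1 : t 1%N = 0%N) (htB : t B.+1 = n.+1)
  (ht : forall i, (1 <= i <= B)%N -> (t i < t i.+1)%N)
  (sfail ssucc sch : seq 'I_n)
  (hsfail : perm_eq sfail (enum 'I_n))
  (hsfail' : sorted (fun a b => c a / (1 - p a) <= c b / (1 - p b)) sfail)
  (hssucc : perm_eq ssucc (enum 'I_n))
  (hssucc' : sorted (fun a b => c a / p a <= c b / p b) ssucc)
  (hsch : perm_eq sch (enum 'I_n))
  (hsch' : sorted (fun a b => c a <= c b) sch)
  (afail asucc ach : R) (hafail : 0 < afail) (hasucc : 0 < asucc) (hach : 0 < ach)
  (OPT : strategy n) (hOPT : is_optimal c p t B OPT)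
  (x : real n) (i : nat) (hi : (1 <= i <= B)%N) (hx : (t i <= ones x < t i.+1)%N)
  (tr : seq ('I_3 * 'I_n))
  (htr : rr_run c t B (three sfail ssucc sch) (three afail asucc ach) x tr)
  (tau1 : nat) (htau1 : is_tau1 t i x tr tau1)
  (h : 'I_3) :
  (three afail asucc ach h)^-1 * rr_cost_upto c tr tau1 h
    <= ach^-1 * scost c t B OPT x.
Proof.
have step := @main_step R n B c p t hc ht sfail ssucc sch hsch hsch' afail asucc ach
  hach OPT hOPT x i hi hx tr htr tau1 htau1.
have Hs : 0 <= ach^-1 * scost c t B OPT x.
  by apply: mulr_ge0; [rewrite invr_ge0 ltW | apply: sumr_ge0 => r _].
suff H : forall P suf, take tau1 tr = P ++ suf ->
  (three afail asucc ach h)^-1 * \sum_(r <- P | r.1 == h) c r.2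
    <= ach^-1 * scost c t B OPT x.
  by apply: (H _ [::]); rewrite cats0.
elim/last_ind => [|P q IH] suf E; first by rewrite big_nil mulr0.
rewrite big_rcons /=; case qh: (q.1 == h); last first.
  by rewrite addr0; apply: (IH (q :: suf)); rewrite E cat_rcons.
have E2 : tr = P ++ q :: (suf ++ drop tau1 tr).
  by rewrite -{1}(cat_take_drop tau1 tr) E cat_rcons -catA.
have hs : (size P < tau1)%N.
  have := size_take_min tau1 tr; rewrite E size_cat size_rcons.
  move=> e; have : (minn tau1 (size tr) <= tau1)%N by apply: geq_minl.
  lia.
have := step _ _ _ E2 hs.
by move/eqP: qh => ->.
Qed.
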